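(* In the sparse activation model with $\alpha_1>0$, where coordinate $j$ of an input is nonzero with probability $p_j=j^{-\alpha_1-1}$ independently across coordinates and across samples, the expected number of coordinates $j\ge1$ that are nonzero in at least one of $D$ i.i.d. training samples is asymptotic, as $D\to\infty$, to the scale $$K(D)=\Gamma\!\left(1-\frac{1}{\alpha_1+1}\right)D^{\frac{1}{\alpha_1+1}},$$ where $\Gamma$ is the Gamma function. Moreover, a coordinate that is never activated in the training set carries no information about its associated target weight $w_j$ and hence cannot contribute to the learned predictor, so $K(D)$ sets the scale of the number of coefficients of $\mathbf{w}$ that can be estimated from the data.
   Context: Sparse activation model: an input $\mathbf{x}$ has independent coordinates $x_j$ with $\mathbb{P}(x_j=0)=1-j^{-\alpha_1-1}$ and $\mathbb{P}(x_j=\pm j^{-(\alpha_2+1)/2})=\tfrac12 j^{-\alpha_1-1}$ each, for exponents $\alpha_1,\alpha_2$ with $\alpha_1+\alpha_2+1>0$. The target is $y(\mathbf{x})=\mathbf{w}^\top\mathbf{x}$ for a weight vector $\mathbf{w}$ with i.i.d. entries of variance $1$; the training set consists of $D$ i.i.d. inputs. *)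

(* Defs.v *)
From Stdlib Require Import Reals.
From Coquelicot Require Import Coquelicot.
Open Scope R_scope.

Definition Gamma (s : R) : R :=
  RInt_gen (fun t => Rpower t (s - 1) * exp (- t))
           (at_right 0) (Rbar_locally p_infty).

Definition p_act (alpha1 : R) (j : nat) : R := Rpower (INR j) (- alpha1 - 1).

(* Probability that coordinate j is nonzero in at least one of D i.i.d.
   samples (independence across samples): 1 - (1 - p_j)^D. *)
Definition prob_seen (alpha1 : R) (D j : nat) : R := 1 - (1 - p_act alpha1 j) ^ D.

(* Expected number of coordinates j >= 1 activated in at least one of the
   D samples = sum over j >= 1 of the probabilities above (linearity of
   expectation over indicator variables). *)
Definition expected_seen (alpha1 : R) (D : nat) : R :=
  Series (fun n => prob_seen alpha1 D (S n)).

Definition K_scale (alpha1 : R) (D : nat) : R :=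
  Gamma (1 - 1 / (alpha1 + 1)) * Rpower (INR D) (1 / (alpha1 + 1)).

(* Main.v *)
Require Import Defs.
From Stdlib Require Import Reals Lra Lia.
From Coquelicot Require Import Coquelicot.
Open Scope R_scope.


Lemma exp_mono x y : x <= y -> exp x <= exp y.
Proof. intros [H|H]. left; apply exp_increasing; auto. subst; lra. Qed.

Definition fg (s t : R) : R := Rpower t (s - 1) * exp (- t).

Lemma cont_Rpower y t : 0 < t -> continuous (fun x => Rpower x y) t.
Proof.
  intros Ht. apply (@ex_derive_continuous R_AbsRing R_NormedModule). eexists. apply is_derive_Reals.
  apply derivable_pt_lim_power; auto.
Qed.

Lemma cont_expm t : continuous (fun x => exp (- x)) t.
Proof. apply (@ex_derive_continuous R_AbsRing R_NormedModule). auto_derive. auto. Qed.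

Lemma cont_fg s t : 0 < t -> continuous (fg s) t.
Proof.
  intros Ht. unfold fg. apply (continuous_mult (fun x => Rpower x (s-1)) (fun x => exp (-x))).
  apply cont_Rpower; auto. apply cont_expm.
Qed.

Lemma ex_RInt_fg s a b : 0 < a -> 0 < b -> ex_RInt (fg s) a b.
Proof.
  intros Ha Hb. apply (@ex_RInt_continuous R_CompleteNormedModule). intros z Hz. apply cont_fg.
  destruct Hz as [H1 _]. apply Rlt_le_trans with (2 := H1).
  unfold Rmin; destruct Rle_dec; lra.
Qed.

Lemma fg_pos s t : 0 <= fg s t.
Proof. unfold fg, Rpower. apply Rmult_le_pos; left; apply exp_pos. Qed.

Lemma RInt_fg_ge0 s a b : 0 < a <= b -> 0 <= RInt (fg s) a b.
Proof.
  intros [Ha Hab]. apply RInt_ge_0; auto. apply ex_RInt_fg; lra.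
  intros; apply fg_pos.
Qed.

Lemma RInt_fg_mono s a' a b b' : 0 < a' -> a' <= a -> a <= b -> b <= b' ->
  RInt (fg s) a b <= RInt (fg s) a' b'.
Proof.
  intros H1 H2 H3 H4.
  rewrite <- (RInt_Chasles (fg s) a' a b'); try (apply ex_RInt_fg; lra).
  rewrite <- (RInt_Chasles (fg s) a b b'); try (apply ex_RInt_fg; lra).
  change (plus ?x ?y) with (x + y); unfold plus; simpl.
  assert (0 <= RInt (fg s) a' a) by (apply RInt_fg_ge0; lra).
  assert (0 <= RInt (fg s) b b') by (apply RInt_fg_ge0; lra).
  unfold plus in *; simpl in *; lra.
Qed.

Lemma is_RInt_expm a b : is_RInt (fun t => exp (- t)) a b (exp (- a) - exp (- b)).
Proof.
  replace (exp (-a) - exp (-b)) with (minus ((fun t => - exp (-t)) b) ((fun t => - exp (-t)) a)).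
  2:{ unfold minus, plus, opp; simpl. ring. }
  apply (@is_RInt_derive R_CompleteNormedModule (fun t => - exp (-t)) (fun t => exp (-t))).
  - intros x _. auto_derive; auto. ring.
  - intros x _. apply cont_expm.
Qed.

Lemma is_RInt_pow s a b : 0 < s -> 0 < a -> 0 < b ->
  is_RInt (fun t => Rpower t (s - 1)) a b ((Rpower b s - Rpower a s) / s).
Proof.
  intros Hs Ha Hb.
  replace ((Rpower b s - Rpower a s) / s) with
    (minus ((fun t => Rpower t s / s) b) ((fun t => Rpower t s / s) a)).
  2:{ unfold minus, plus, opp; simpl. field. lra. }
  apply (@is_RInt_derive R_CompleteNormedModule (fun t => Rpower t s / s) (fun t => Rpower t (s-1))).
  - intros x Hx. assert (0 < x).
    { destruct Hx as [H1 _]. apply Rlt_le_trans with (2 := H1). unfold Rmin; destruct Rle_dec; lra. }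
    replace (Rpower x (s - 1)) with (/ s * (s * Rpower x (s - 1))) by (field; lra).
    apply (is_derive_ext (fun t => / s * Rpower t s)). intros; simpl; field; lra.
    apply is_derive_scal. apply is_derive_Reals.
    apply derivable_pt_lim_power; auto.
  - intros x Hx. apply cont_Rpower.
    destruct Hx as [H1 _]. apply Rlt_le_trans with (2 := H1). unfold Rmin; destruct Rle_dec; lra.
Qed.


Definition gseq (s : R) (n : nat) := RInt (fg s) (/ (INR n + 1)) (INR n + 1).

Lemma inv_le_self n : / (INR n + 1) <= INR n + 1.
Proof.
  pose proof (pos_INR n).
  apply Rle_trans with 1. rewrite <- Rinv_1. apply Rinv_le_contravar; lra. lra.
Qed.

Lemma inv_pos' n : 0 < / (INR n + 1).
Proof. pose proof (pos_INR n). apply Rinv_0_lt_compat; lra. Qed.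

Lemma gseq_incr s n : gseq s n <= gseq s (S n).
Proof.
  unfold gseq. rewrite S_INR. pose proof (pos_INR n).
  apply RInt_fg_mono.
  - apply Rinv_0_lt_compat; lra.
  - apply Rinv_le_contravar; lra.
  - apply inv_le_self.
  - lra.
Qed.

Lemma fg_le_pow s t : 0 < t -> fg s t <= Rpower t (s - 1).
Proof.
  intros Ht. unfold fg. rewrite <- (Rmult_1_r (Rpower t (s-1))) at 2.
  apply Rmult_le_compat_l. unfold Rpower; left; apply exp_pos.
  rewrite <- exp_0. apply exp_mono. lra.
Qed.

Lemma fg_le_exp s t : s <= 1 -> 1 <= t -> fg s t <= exp (- t).
Proof.
  intros Hs Ht. unfold fg. rewrite <- (Rmult_1_l (exp (- t))) at 2.
  apply Rmult_le_compat_r. left; apply exp_pos.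
  unfold Rpower. apply Rle_trans with (exp 0); [apply exp_mono | rewrite exp_0; lra].
  assert (0 <= ln t). { rewrite <- ln_1. apply ln_le; lra. }
  nra.
Qed.

Lemma RInt_fg_left s a : 0 < s -> 0 < a <= 1 -> RInt (fg s) a 1 <= 1 / s.
Proof.
  intros Hs [Ha Ha1].
  apply Rle_trans with (RInt (fun t => Rpower t (s - 1)) a 1).
  - apply RInt_le; auto. apply ex_RInt_fg; lra.
    eexists. apply is_RInt_pow; lra.
    intros x Hx. apply fg_le_pow. lra.
  - rewrite (is_RInt_unique _ _ _ _ (is_RInt_pow s a 1 Hs Ha Rlt_0_1)).
    assert (0 < Rpower a s) by (unfold Rpower; apply exp_pos).
    assert (Rpower 1 s = 1). { unfold Rpower. rewrite ln_1, Rmult_0_r. apply exp_0. }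
    rewrite H0. unfold Rdiv. apply Rmult_le_compat_r. left; apply Rinv_0_lt_compat; auto. lra.
Qed.

Lemma RInt_fg_right s b : s <= 1 -> 1 <= b -> RInt (fg s) 1 b <= 1.
Proof.
  intros Hs Hb.
  apply Rle_trans with (RInt (fun t => exp (- t)) 1 b).
  - apply RInt_le; auto. apply ex_RInt_fg; lra.
    eexists. apply is_RInt_expm.
    intros x Hx. apply fg_le_exp; lra.
  - rewrite (is_RInt_unique _ _ _ _ (is_RInt_expm 1 b)).
    pose proof (exp_pos (-b)). assert (exp (Ropp 1) <= 1). { apply Rle_trans with (exp 0); [apply exp_mono | rewrite exp_0]; lra. }
    lra.
Qed.

Lemma gseq_bound s n : 0 < s < 1 -> gseq s n <= 1 / s + 1.
Proof.
  intros Hs. unfold gseq. pose proof (pos_INR n). pose proof (inv_pos' n).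
  assert (/ (INR n + 1) <= 1). { rewrite <- Rinv_1. apply Rinv_le_contravar; lra. }
  rewrite <- (RInt_Chasles (fg s) _ 1); try (apply ex_RInt_fg; lra).
  change (plus ?x ?y) with (x + y); unfold plus; simpl.
  pose proof (RInt_fg_left s (/ (INR n + 1)) ltac:(lra) ltac:(lra)).
  pose proof (RInt_fg_right s (INR n + 1) ltac:(lra) ltac:(lra)).
  lra.
Qed.

Lemma Gamma_facts s : 0 < s < 1 ->
  exists G, 0 < G /\ is_RInt_gen (fg s) (at_right 0) (Rbar_locally p_infty) G /\
  (forall a b, 0 < a -> a <= b -> RInt (fg s) a b <= G) /\
  (forall eps, 0 < eps -> exists a0 b0, 0 < a0 <= b0 /\ G - eps < RInt (fg s) a0 b0).
Proof.
  intros Hs.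
  destruct (ex_finite_lim_seq_incr (gseq s) (1 / s + 1) (gseq_incr s) (fun n => gseq_bound s n Hs))
    as [G HG].
  assert (Hle : forall n, gseq s n <= G) by (apply is_lim_seq_incr_compare; auto; apply gseq_incr).
  assert (Hsup : forall a b, 0 < a -> a <= b -> RInt (fg s) a b <= G).
  { intros a b Ha Hab.
    destruct (INR_unbounded (Rmax b (/ a))) as [n Hn].
    apply Rle_trans with (gseq s n); auto. unfold gseq.
    pose proof (Rmax_l b (/ a)). pose proof (Rmax_r b (/ a)).
    apply RInt_fg_mono; auto.
    - apply inv_pos'.
    - rewrite <- (Rinv_inv a). apply Rinv_le_contravar. apply Rinv_0_lt_compat; auto. lra.
    - lra. }
  assert (Happ : forall eps, 0 < eps -> exists a0 b0, 0 < a0 <= b0 /\ G - eps < RInt (fg s) a0 b0).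
  { intros eps Heps. apply is_lim_seq_spec in HG. destruct (HG (mkposreal eps Heps)) as [N HN].
    specialize (HN N (le_n N)). simpl in HN.
    exists (/ (INR N + 1)), (INR N + 1). split. split. apply inv_pos'. apply inv_le_self.
    fold (gseq s N). apply Rabs_def2 in HN. lra. }
  exists G. split; [|split; [|split]]; auto.
  - apply Rlt_le_trans with (RInt (fg s) 1 2); [| apply Hsup; lra].
    apply Rlt_le_trans with (RInt (fun _ => exp (-1) * exp (-2)) 1 2).
    + rewrite RInt_const. change (scal ?x ?y) with (mult x y). unfold mult; simpl.
      pose proof (exp_pos (-1)); pose proof (exp_pos (-2)).
      apply Rmult_lt_0_compat; [lra|]. apply Rmult_lt_0_compat; auto.
    + apply RInt_le. lra. apply ex_RInt_const. apply ex_RInt_fg; lra.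
      intros x Hx. unfold fg. apply Rmult_le_compat.
      * left; apply exp_pos.
      * left; apply exp_pos.
      * unfold Rpower. apply exp_mono.
        assert (0 <= ln x) by (rewrite <- ln_1; apply ln_le; lra).
        assert (ln x <= ln 2) by (apply ln_le; lra).
        assert (ln 2 < 1). { apply Rlt_le_trans with (ln (exp 1)); [apply ln_increasing; [lra|] | rewrite ln_exp; lra].
          pose proof (exp_ineq1 1 R1_neq_R0). lra. }
        assert (0 <= s * ln x) by (apply Rmult_le_pos; lra). lra.
      * apply exp_mono. lra.
  - apply (filterlimi_lim_ext_loc (fun ab => RInt (fg s) (fst ab) (snd ab))).
    + apply Filter_prod with (Q := fun a => 0 < a) (R := fun b => 0 < b).
      * exists (mkposreal 1 Rlt_0_1). intros; auto.
      * exists 0. intros; auto.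
      * intros a b Ha Hb. simpl. apply (RInt_correct (V := R_CompleteNormedModule)).
        apply ex_RInt_fg; auto.
    + apply filterlim_locally. intros eps.
      destruct (Happ eps (cond_pos eps)) as [a0 [b0 [[Ha0 Hab0] Hlt]]].
      apply Filter_prod with (Q := fun a => 0 < a <= a0) (R := fun b => b0 <= b).
      * exists (mkposreal a0 Ha0). intros y Hy Hy0. split; auto.
        change (Rabs (y - 0) < a0) in Hy. apply Rabs_def2 in Hy. lra.
      * exists b0. intros; lra.
      * intros a b [Ha Haa0] Hb. simpl. change (Rabs (RInt (fg s) a b - G) < eps).
        pose proof (RInt_fg_mono s a a0 b0 b Ha Haa0 Hab0 Hb).
        pose proof (Hsup a b Ha ltac:(lra)).
        apply Rabs_def1; lra.
Qed.


Lemma RInt_scal_R f a b l : ex_RInt f a b -> RInt (fun x => l * f x) a b = l * RInt f a b.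
Proof. intros H. exact (RInt_scal f a b l H). Qed.

Lemma is_RInt_cexp c a b : is_RInt (fun t => c * exp (- t)) a b (c * (exp (- a) - exp (- b))).
Proof. exact (is_RInt_scal _ _ _ c _ (is_RInt_expm a b)). Qed.

Lemma p_S al n : p_act al (S n) = exp ((- al - 1) * ln (INR n + 1)).
Proof. unfold p_act, Rpower. rewrite S_INR. reflexivity. Qed.

Lemma p_pos al n : 0 < p_act al (S n).
Proof. rewrite p_S. apply exp_pos. Qed.

Lemma ln_n1_ge0 n : 0 <= ln (INR n + 1).
Proof. pose proof (pos_INR n). rewrite <- ln_1. apply ln_le; lra. Qed.

Lemma p_le1 al n : 0 < al -> p_act al (S n) <= 1.
Proof.
  intros Ha. rewrite p_S. apply Rle_trans with (exp 0); [apply exp_mono|rewrite exp_0; lra].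
  pose proof (ln_n1_ge0 n). nra.
Qed.

Lemma p_one al : p_act al 1 = 1.
Proof. rewrite p_S. simpl. rewrite Rplus_0_l, ln_1, Rmult_0_r. apply exp_0. Qed.

Lemma p_decr al n : 0 < al -> p_act al (S (S n)) <= p_act al (S n).
Proof.
  intros Ha. rewrite !p_S. apply exp_mono. rewrite S_INR.
  pose proof (pos_INR n).
  assert (ln (INR n + 1) <= ln (INR n + 1 + 1)) by (apply ln_le; lra).
  nra.
Qed.

Lemma pointwise al x n t : 0 < al -> 0 < x ->
  x * p_act al (S (S n)) <= t <= x * p_act al (S n) ->
  (INR n + 1) * exp (- t) <= Rpower x (1 / (al + 1)) * fg (1 - 1 / (al + 1)) t <=
  (INR n + 2) * exp (- t).
Proof.
  intros Ha Hx [Ht1 Ht2].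
  pose proof (pos_INR n).
  assert (Htp : 0 < t). { pose proof (p_pos al (S n)). apply Rlt_le_trans with (2 := Ht1). nra. }
  assert (E : Rpower x (1 / (al + 1)) * fg (1 - 1 / (al + 1)) t =
              exp ((1 / (al + 1)) * (ln x - ln t)) * exp (- t)).
  { unfold fg, Rpower. rewrite <- Rmult_assoc, <- exp_plus. f_equal. f_equal. ring. }
  rewrite E.
  assert (L1 : ln t <= ln x + (- al - 1) * ln (INR n + 1)).
  { rewrite p_S in Ht2. apply ln_le in Ht2; auto.
    rewrite ln_mult, ln_exp in Ht2; auto. apply exp_pos. }
  assert (L2 : ln x + (- al - 1) * ln (INR (S n) + 1) <= ln t).
  { rewrite p_S in Ht1. apply ln_le in Ht1; [|apply Rmult_lt_0_compat; auto; apply exp_pos].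
    rewrite ln_mult, ln_exp in Ht1; auto. apply exp_pos. }
  rewrite S_INR in L2.
  assert (Hg : 0 < 1 / (al + 1)) by (apply Rdiv_lt_0_compat; lra).
  assert (K : 1 / (al + 1) * (al + 1) = 1) by (field; lra).
  split; apply Rmult_le_compat_r; try (left; apply exp_pos).
  - rewrite <- (exp_ln (INR n + 1)) at 1 by lra. apply exp_mono.
    assert ((al + 1) * ln (INR n + 1) <= ln x - ln t) by lra.
    apply Rmult_le_compat_l with (r := 1 / (al + 1)) in H0; [|lra].
    rewrite <- Rmult_assoc, K, Rmult_1_l in H0. exact H0.
  - replace (INR n + 2) with (INR n + 1 + 1) by ring.
    rewrite <- (exp_ln (INR n + 1 + 1)) by lra. apply exp_mono.
    assert (ln x - ln t <= (al + 1) * ln (INR n + 1 + 1)) by lra.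
    apply Rmult_le_compat_l with (r := 1 / (al + 1)) in H0; [|lra].
    rewrite <- (Rmult_assoc _ (al + 1)), K, Rmult_1_l in H0. exact H0.
Qed.


Section Core.
Variables (al x : R).
Hypothesis Ha : 0 < al.
Hypothesis Hx : 0 < x.
Let g := 1 / (al + 1).
Let s := 1 - 1 / (al + 1).
Let tt j := x * p_act al j.
Let A n := sum_f_R0 (fun k => 1 - exp (- tt (S k))) n.
Let B n := (INR n + 1) * (1 - exp (- tt (S n))).
Let I n := Rpower x g * RInt (fg s) (tt (S n)) (tt 1%nat).

Lemma tt_pos n : 0 < tt (S n).
Proof. unfold tt. apply Rmult_lt_0_compat; auto. apply p_pos. Qed.

Lemma core n : A n - B n <= I n <= A n - B n + exp (- tt (S n)) - exp (- tt 1%nat).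
Proof.
  induction n as [|n IH].
  - unfold A, B, I. simpl. rewrite RInt_point. change (@zero R_CompleteNormedModule) with 0. lra.
  - assert (EA : A (S n) = A n + (1 - exp (- tt (S (S n))))) by reflexivity.
    assert (EB : B (S n) = (INR n + 2) * (1 - exp (- tt (S (S n))))).
    { unfold B. rewrite S_INR. ring. }
    assert (EI : I (S n) = Rpower x g * RInt (fg s) (tt (S (S n))) (tt (S n)) + I n).
    { unfold I. rewrite <- (RInt_Chasles (fg s) (tt (S (S n))) (tt (S n)) (tt 1%nat)).
      change (plus ?a ?b) with (a + b). unfold plus; simpl. ring.
      apply ex_RInt_fg; apply tt_pos. apply ex_RInt_fg; apply tt_pos. }
    assert (Hle : tt (S (S n)) <= tt (S n)).
    { unfold tt. apply Rmult_le_compat_l; [lra|]. apply p_decr; auto. }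
    assert (J : (INR n + 1) * (exp (- tt (S (S n))) - exp (- tt (S n))) <=
                Rpower x g * RInt (fg s) (tt (S (S n))) (tt (S n)) <=
                (INR n + 2) * (exp (- tt (S (S n))) - exp (- tt (S n)))).
    { set (a := tt (S (S n))) in *. set (b := tt (S n)) in *.
      assert (Ha' : 0 < a) by apply tt_pos. assert (Hb' : 0 < b) by apply tt_pos.
      rewrite <- (RInt_scal_R (fg s) a b (Rpower x g)) by (apply ex_RInt_fg; auto).
      rewrite <- (is_RInt_unique _ _ _ _ (is_RInt_cexp (INR n + 1) a b)).
      rewrite <- (is_RInt_unique _ _ _ _ (is_RInt_cexp (INR n + 2) a b)).
      assert (E1 : ex_RInt (fun t => Rpower x g * fg s t) a b).
      { apply (ex_RInt_scal (V := R_CompleteNormedModule)). apply ex_RInt_fg; auto. }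
      assert (Hpw : forall t, a < t < b -> (INR n + 1) * exp (- t) <= Rpower x g * fg s t <= (INR n + 2) * exp (- t)).
      { intros t Ht. apply (pointwise al x n t Ha Hx). unfold a, b, tt in Ht. lra. }
      split; apply RInt_le; auto.
      - eexists; apply is_RInt_cexp.
      - intros t Ht; apply Hpw; auto.
      - eexists; apply is_RInt_cexp.
      - intros t Ht; apply Hpw; auto. }
    rewrite EA, EB, EI. unfold B in IH.
    set (IA := A n) in *. set (II := I n) in *. set (e1 := exp (- tt (S n))) in *.
    set (e2 := exp (- tt (S (S n)))) in *. set (e0 := exp (- tt 1%nat)) in *.
    set (R := Rpower x g * RInt (fg s) (tt (S (S n))) (tt (S n))) in *.
    set (N := INR n) in *. clearbody IA II e1 e2 e0 R N.
    destruct IH, J. nra.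
Qed.
End Core.


Lemma archi_pow r y : 0 < r -> exists N, forall m, (N <= m)%nat -> y <= Rpower (INR m) r.
Proof.
  intros Hr. set (z := exp (ln (Rmax y 1) / r)).
  assert (Hz : 0 < z) by apply exp_pos.
  destruct (INR_unbounded z) as [N HN]. exists N. intros m Hm.
  apply le_INR in Hm.
  assert (L : ln z <= ln (INR m)) by (apply ln_le; lra).
  unfold z in L. rewrite ln_exp in L.
  unfold Rpower. apply Rle_trans with (Rmax y 1); [apply Rmax_l|].
  rewrite <- (exp_ln (Rmax y 1)) at 1 by (pose proof (Rmax_r y 1); lra).
  apply exp_mono. apply Rmult_le_compat_l with (r := r) in L; [|lra].
  replace (r * (ln (Rmax y 1) / r)) with (ln (Rmax y 1)) in L by (field; lra). exact L.
Qed.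

Lemma one_m_exp_nonneg t : 0 <= t -> 0 <= 1 - exp (- t).
Proof. intros. assert (exp (- t) <= exp 0) by (apply exp_mono; lra). rewrite exp_0 in H0. lra. Qed.

Lemma one_m_exp_le t : 1 - exp (- t) <= t.
Proof. pose proof (exp_ineq1_le (- t)). lra. Qed.

Lemma sum_mono u n m : (forall k, 0 <= u k) -> (n <= m)%nat -> sum_f_R0 u n <= sum_f_R0 u m.
Proof.
  intros Hu Hnm. induction Hnm. lra. simpl. specialize (Hu (S m)). lra.
Qed.

Section Bounds.
Variables (al x : R).
Hypothesis Ha : 0 < al.
Hypothesis Hx : 0 < x.

Lemma tt_pos' n : 0 < x * p_act al (S n).
Proof. apply Rmult_lt_0_compat; auto. apply p_pos. Qed.

Lemma A_upper G : (forall a b, 0 < a -> a <= b -> RInt (fg (1 - 1 / (al + 1))) a b <= G) ->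
  forall n, sum_f_R0 (fun k => 1 - exp (- (x * p_act al (S k)))) n <= Rpower x (1 / (al + 1)) * G + 1.
Proof.
  intros HG n.
  destruct (archi_pow al x Ha) as [N HN].
  set (m := Nat.max n N).
  apply Rle_trans with (sum_f_R0 (fun k => 1 - exp (- (x * p_act al (S k)))) m).
  { apply sum_mono. intros k; apply one_m_exp_nonneg. left; apply tt_pos'. lia. }
  destruct (core al x Ha Hx m) as [C1 C2].
  assert (HB : (INR m + 1) * (1 - exp (- (x * p_act al (S m)))) <= 1).
  { specialize (HN (S m) ltac:(lia)).
    pose proof (pos_INR m).
    apply Rle_trans with ((INR m + 1) * (x * p_act al (S m))).
    { apply Rmult_le_compat_l. lra. apply one_m_exp_le. }
    rewrite p_S. unfold Rpower in HN. rewrite S_INR in HN.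
    rewrite <- (exp_ln (INR m + 1)) at 1 by lra.
    replace (exp (ln (INR m + 1)) * (x * exp ((- al - 1) * ln (INR m + 1))))
      with (x * / exp (al * ln (INR m + 1))).
    2:{ rewrite <- exp_Ropp. rewrite (Rmult_comm (exp (ln _))), Rmult_assoc, <- exp_plus. f_equal. f_equal. ring. }
    pose proof (exp_pos (al * ln (INR m + 1))).
    apply Rle_trans with (exp (al * ln (INR m + 1)) * / exp (al * ln (INR m + 1))).
    apply Rmult_le_compat_r; auto. left; apply Rinv_0_lt_compat; auto.
    rewrite Rinv_r; lra. }
  assert (HI : Rpower x (1 / (al + 1)) * RInt (fg (1 - 1 / (al + 1))) (x * p_act al (S m)) (x * p_act al 1%nat)
               <= Rpower x (1 / (al + 1)) * G).
  { apply Rmult_le_compat_l. unfold Rpower; left; apply exp_pos.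
    apply HG. apply tt_pos'. apply Rmult_le_compat_l. lra. rewrite p_one. apply p_le1; auto. }
  lra.
Qed.

Lemma A_lower a : 0 < a -> a <= x -> exists N, forall n, (N <= n)%nat ->
  Rpower x (1 / (al + 1)) * RInt (fg (1 - 1 / (al + 1))) a x - 1 <=
  sum_f_R0 (fun k => 1 - exp (- (x * p_act al (S k)))) n.
Proof.
  intros Ha0 Hax.
  destruct (archi_pow (al + 1) (x / a) ltac:(lra)) as [N HN].
  exists N. intros n Hn.
  destruct (core al x Ha Hx n) as [C1 C2].
  rewrite p_one, Rmult_1_r in C2.
  assert (Ht : x * p_act al (S n) <= a).
  { specialize (HN (S n) ltac:(lia)). rewrite p_S. unfold Rpower in HN. rewrite S_INR in HN.
    replace ((- al - 1) * ln (INR n + 1)) with (- ((al + 1) * ln (INR n + 1))) by ring.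
    rewrite exp_Ropp. pose proof (exp_pos ((al + 1) * ln (INR n + 1))).
    apply Rmult_le_reg_r with (exp ((al + 1) * ln (INR n + 1))); auto.
    rewrite Rmult_assoc, Rinv_l by lra. rewrite Rmult_1_r.
    apply Rmult_le_compat_l with (r := a) in HN; [|lra].
    replace (a * (x / a)) with x in HN by (field; lra). lra. }
  assert (HR : RInt (fg (1 - 1 / (al + 1))) a x <= RInt (fg (1 - 1 / (al + 1))) (x * p_act al (S n)) x).
  { apply RInt_fg_mono; auto; try lra. apply tt_pos'. }
  assert (0 <= Rpower x (1 / (al + 1))) by (unfold Rpower; left; apply exp_pos).
  apply Rmult_le_compat_l with (r := Rpower x (1 / (al + 1))) in HR; auto.
  pose proof (pos_INR n).
  assert (0 <= (INR n + 1) * (1 - exp (- (x * p_act al (S n))))).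
  { apply Rmult_le_pos. lra. apply one_m_exp_nonneg. left; apply tt_pos'. }
  assert (exp (- (x * p_act al (S n))) <= 1).
  { pose proof (one_m_exp_nonneg (x * p_act al (S n)) ltac:(left; apply tt_pos')). lra. }
  pose proof (exp_pos (- x)).
  lra.
Qed.
End Bounds.


Lemma exp_pow y n : exp y ^ n = exp (INR n * y).
Proof.
  induction n. simpl. rewrite Rmult_0_l, exp_0. reflexivity.
  simpl pow. rewrite IHn, S_INR, <- exp_plus. f_equal. ring.
Qed.

Lemma pw_bounds al D n : 0 < al -> 0 <= (1 - p_act al (S n)) ^ D <= 1.
Proof.
  intros Ha. pose proof (p_pos al n). pose proof (p_le1 al n Ha).
  split. apply pow_le. lra. apply Rle_trans with (1 ^ D); [apply pow_incr; lra | rewrite pow1; lra].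
Qed.

Lemma prob_nonneg al D n : 0 < al -> 0 <= prob_seen al D (S n).
Proof. intros Ha. unfold prob_seen. pose proof (pw_bounds al D n Ha). lra. Qed.

Lemma prob_lower al D n : 0 < al ->
  1 - exp (- (INR D * p_act al (S n))) <= prob_seen al D (S n).
Proof.
  intros Ha. unfold prob_seen. pose proof (p_pos al n). pose proof (p_le1 al n Ha).
  assert ((1 - p_act al (S n)) ^ D <= exp (- p_act al (S n)) ^ D).
  { apply pow_incr. split. lra. pose proof (exp_ineq1_le (- p_act al (S n))). lra. }
  rewrite exp_pow in H1. replace (INR D * - p_act al (S n)) with (- (INR D * p_act al (S n))) in H1 by ring.
  lra.
Qed.

Lemma prob_upper al D n c : 0 < al -> 1 <= c -> p_act al (S n) <= (c - 1) / c ->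
  prob_seen al D (S n) <= 1 - exp (- (c * INR D * p_act al (S n))).
Proof.
  intros Ha Hc Hp. unfold prob_seen. pose proof (p_pos al n). set (p := p_act al (S n)) in *.
  assert (E : exp (- (c * p)) <= 1 - p).
  { rewrite exp_Ropp. pose proof (exp_ineq1_le (c * p)).
    assert (0 < 1 + c * p) by nra.
    apply Rle_trans with (/ (1 + c * p)). apply Rinv_le_contravar; lra.
    assert (p * c <= c - 1).
    { apply Rmult_le_compat_r with (r := c) in Hp; [|lra].
      replace ((c - 1) / c * c) with (c - 1) in Hp by (field; lra). lra. }
    apply Rmult_le_reg_r with (1 + c * p); auto. rewrite Rinv_l by lra. nra. }
  assert (exp (- (c * p)) ^ D <= (1 - p) ^ D).
  { apply pow_incr. split; auto. left; apply exp_pos. }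
  rewrite exp_pow in H0. replace (INR D * - (c * p)) with (- (c * INR D * p)) in H0 by ring.
  lra.
Qed.

Lemma p_small al y : 0 < al -> 0 < y -> exists N, forall k, (N <= S k)%nat -> p_act al (S k) <= y.
Proof.
  intros Ha Hy. destruct (archi_pow (al + 1) (/ y) ltac:(lra)) as [N HN].
  exists N. intros k Hk. specialize (HN (S k) Hk).
  rewrite p_S. unfold Rpower in HN. rewrite S_INR in HN.
  replace ((- al - 1) * ln (INR k + 1)) with (- ((al + 1) * ln (INR k + 1))) by ring.
  rewrite exp_Ropp. rewrite <- (Rinv_inv y).
  apply Rinv_le_contravar; auto. apply Rinv_0_lt_compat; auto.
Qed.

Lemma ind_sum N n : sum_f_R0 (fun k => if Nat.leb N (S k) then 0 else 1) n <= INR (Nat.min (S n) N).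
Proof.
  induction n.
  - destruct N as [|[|N]]; simpl; lra.
  - simpl sum_f_R0. destruct (Nat.leb N (S (S n))) eqn:E.
    + apply Nat.leb_le in E. apply Rle_trans with (INR (Nat.min (S n) N)). lra.
      apply le_INR. lia.
    + apply Nat.leb_gt in E. rewrite Nat.min_l in IHn by lia. rewrite Nat.min_l by lia.
      rewrite (S_INR (S n)). lra.
Qed.

Lemma ind_sum' N n : sum_f_R0 (fun k => if Nat.leb N (S k) then 0 else 1) n <= INR N.
Proof. apply Rle_trans with (1 := ind_sum N n). apply le_INR. lia. Qed.


Lemma partial_upper al D c N G : 0 < al -> 1 <= c ->
  (forall k, (N <= S k)%nat -> p_act al (S k) <= (c - 1) / c) ->
  (forall a b, 0 < a -> a <= b -> RInt (fg (1 - 1 / (al + 1))) a b <= G) ->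
  0 < c * INR D ->
  forall n, sum_f_R0 (fun k => prob_seen al D (S k)) n <= Rpower (c * INR D) (1 / (al + 1)) * G + 1 + INR N.
Proof.
  intros Ha Hc HN HG Hx n.
  apply Rle_trans with (sum_f_R0 (fun k => (1 - exp (- (c * INR D * p_act al (S k)))) +
                                         (if Nat.leb N (S k) then 0 else 1)) n).
  { apply sum_Rle. intros k _. destruct (Nat.leb N (S k)) eqn:E.
    - apply Nat.leb_le in E. pose proof (prob_upper al D k c Ha Hc (HN k E)). lra.
    - pose proof (pw_bounds al D k Ha). unfold prob_seen.
      pose proof (one_m_exp_nonneg (c * INR D * p_act al (S k))).
      assert (0 <= c * INR D * p_act al (S k)) by (pose proof (p_pos al k); nra). lra. }
  rewrite plus_sum.
  pose proof (A_upper al (c * INR D) Ha Hx G HG n).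
  pose proof (ind_sum' N n). lra.
Qed.

Lemma bounded_partial al G : 0 < al ->
  (forall a b, 0 < a -> a <= b -> RInt (fg (1 - 1 / (al + 1))) a b <= G) ->
  forall D, exists M, forall n, sum_f_R0 (fun k => prob_seen al D (S k)) n <= M.
Proof.
  intros Ha HG D. destruct D as [|D].
  - exists (Rpower 1 (1 / (al + 1)) * G + 1). intros n.
    apply Rle_trans with (sum_f_R0 (fun k => 1 - exp (- (1 * p_act al (S k)))) n).
    + apply sum_Rle. intros k _. unfold prob_seen. simpl.
      apply Rle_trans with 0. lra. apply one_m_exp_nonneg. pose proof (p_pos al k). lra.
    + apply A_upper; auto. lra.
  - destruct (p_small al (1 / 2) Ha ltac:(lra)) as [N HN].
    exists (Rpower (2 * INR (S D)) (1 / (al + 1)) * G + 1 + INR N).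
    apply partial_upper; auto. lra.
    intros k Hk. replace ((2 - 1) / 2) with (1 / 2) by field. auto.
    pose proof (lt_0_INR (S D) ltac:(lia)). lra.
Qed.

Lemma partial_incr al D n : 0 < al ->
  sum_f_R0 (fun k => prob_seen al D (S k)) n <= sum_f_R0 (fun k => prob_seen al D (S k)) (S n).
Proof. intros Ha. simpl. pose proof (prob_nonneg al D (S n) Ha). lra. Qed.

Lemma series_lim al G D : 0 < al ->
  (forall a b, 0 < a -> a <= b -> RInt (fg (1 - 1 / (al + 1))) a b <= G) ->
  ex_series (fun n => prob_seen al D (S n)) /\
  is_lim_seq (fun n => sum_f_R0 (fun k => prob_seen al D (S k)) n) (expected_seen al D).
Proof.
  intros Ha HG.
  destruct (bounded_partial al G Ha HG D) as [M HM].
  assert (Hex : ex_series (fun n => prob_seen al D (S n))).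
  { destruct (ex_finite_lim_seq_incr (sum_n (fun n => prob_seen al D (S n))) M) as [l Hl].
    - intros n. rewrite !sum_n_Reals. apply partial_incr; auto.
    - intros n. rewrite sum_n_Reals. apply HM.
    - exists l. exact Hl. }
  split; auto.
  pose proof (Series_correct _ Hex) as Hs.
  apply (is_lim_seq_ext (sum_n (fun n => prob_seen al D (S n)))).
  intros n; apply sum_n_Reals. exact Hs.
Qed.


Theorem lemma1 (alpha1 : R) (Halpha : 0 < alpha1) :
  (forall D : nat, ex_series (fun n => prob_seen alpha1 D (S n))) /\
  is_lim_seq (fun D : nat => expected_seen alpha1 D / K_scale alpha1 D) 1.
Proof.
  set (g := 1 / (alpha1 + 1)).
  assert (Hg : 0 < g < 1).
  { unfold g. split. apply Rdiv_lt_0_compat; lra.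
    apply Rmult_lt_reg_r with (alpha1 + 1). lra. unfold Rdiv. rewrite Rmult_assoc, Rinv_l by lra. lra. }
  assert (Hs : 0 < 1 - g < 1) by lra.
  destruct (Gamma_facts (1 - g) Hs) as [G [HGpos [HGint [Hsup Happ]]]].
  assert (HGam : Gamma (1 - 1 / (alpha1 + 1)) = G).
  { change (RInt_gen (fg (1 - g)) (at_right 0) (Rbar_locally p_infty) = G).
    apply is_RInt_gen_unique; auto. }
  split.
  { intros D. apply (series_lim alpha1 G D Halpha Hsup). }
  apply is_lim_seq_spec. intros eps.
  set (d := eps / 3).
  assert (Hd : 0 < d) by (unfold d; pose proof (cond_pos eps); lra).
  set (c := 1 + d).
  destruct (p_small alpha1 ((c - 1) / c) Halpha ltac:(unfold c; apply Rdiv_lt_0_compat; lra)) as [Nc HNc].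
  destruct (Happ (G * d) ltac:(apply Rmult_lt_0_compat; lra)) as [a0 [b0 [[Ha0 Hab0] Hlt]]].
  destruct (archi_pow g ((2 + INR Nc) / (G * d)) ltac:(lra)) as [N1 HN1].
  destruct (INR_unbounded b0) as [N2 HN2].
  exists (Nat.max 1 (Nat.max N1 N2)). intros D HD.
  assert (HD1 : 1 <= INR D) by (apply (le_INR 1); lia).
  assert (HDb : b0 <= INR D) by (pose proof (le_INR N2 D ltac:(lia)); lra).
  specialize (HN1 D ltac:(lia)).
  set (P := Rpower (INR D) g) in *.
  assert (HP : 0 < P) by (unfold P, Rpower; apply exp_pos).
  set (K := G * P).
  assert (HK : K_scale alpha1 D = K) by (unfold K_scale, K, P; rewrite HGam; reflexivity).
  rewrite HK.
  assert (HKpos : 0 < K) by (unfold K; apply Rmult_lt_0_compat; auto).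
  assert (HdK : 2 + INR Nc <= d * K).
  { unfold K. apply Rmult_le_compat_l with (r := G * d) in HN1; [|nra].
    replace (G * d * ((2 + INR Nc) / (G * d))) with (2 + INR Nc) in HN1 by (field; lra). nra. }
  pose proof (pos_INR Nc).
  destruct (series_lim alpha1 G D Halpha Hsup) as [_ Hlim].
  set (T := expected_seen alpha1 D) in *.
  assert (HTu : T <= K + 2 * d * K).
  { assert (Hpu := partial_upper alpha1 D c Nc G Halpha ltac:(unfold c; lra) HNc Hsup
                     ltac:(unfold c; apply Rmult_lt_0_compat; lra)).
    assert (T <= Rpower (c * INR D) g * G + 1 + INR Nc).
    { assert (Hc := is_lim_seq_const (Rpower (c * INR D) g * G + 1 + INR Nc)).
      pose proof (is_lim_seq_le _ _ _ _ Hpu Hlim Hc). simpl in H0. exact H0. }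
    assert (Rpower (c * INR D) g <= c * P).
    { unfold P. rewrite <- Rpower_mult_distr by (unfold c; lra).
      apply Rmult_le_compat_r. left; exact HP.
      unfold Rpower. rewrite <- (exp_ln c) at 2 by (unfold c; lra). apply exp_mono.
      assert (0 <= ln c) by (rewrite <- ln_1; apply ln_le; unfold c; lra).
      nra. }
    assert (Rpower (c * INR D) g * G <= c * P * G) by (apply Rmult_le_compat_r; lra).
    unfold c in *. unfold K in *. nra. }
  assert (HTl : K - 2 * d * K <= T).
  { destruct (A_lower alpha1 (INR D) Halpha ltac:(lra) a0 Ha0 ltac:(lra)) as [N HN].
    specialize (HN N (le_n N)).
    assert (sum_f_R0 (fun k => 1 - exp (- (INR D * p_act alpha1 (S k)))) N <=
            sum_f_R0 (fun k => prob_seen alpha1 D (S k)) N).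
    { apply sum_Rle. intros; apply prob_lower; auto. }
    assert (sum_f_R0 (fun k => prob_seen alpha1 D (S k)) N <= T).
    { apply (is_lim_seq_incr_compare _ _ Hlim). intros; apply partial_incr; auto. }
    assert (RInt (fg (1 - 1 / (alpha1 + 1))) a0 b0 <= RInt (fg (1 - 1 / (alpha1 + 1))) a0 (INR D)).
    { apply RInt_fg_mono; lra. }
    fold g in HN, H2. fold P in HN.
    assert (P * (G - G * d) <= P * RInt (fg (1 - g)) a0 (INR D)).
    { apply Rmult_le_compat_l; lra. }
    unfold K in *. lra. }
  assert (Habs : Rabs (T - K) <= 2 * d * K) by (apply Rabs_le; lra).
  replace (T / K - 1) with ((T - K) / K) by (field; lra).
  unfold Rdiv. rewrite Rabs_mult, (Rabs_right (/ K)) by (left; apply Rinv_0_lt_compat; auto).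
  apply Rle_lt_trans with (2 * d * K * / K).
  apply Rmult_le_compat_r; auto. left; apply Rinv_0_lt_compat; auto.
  replace (2 * d * K * / K) with (2 * d) by (field; lra). unfold d. pose proof (cond_pos eps). lra.
Qed.
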